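(* Let $v$ be a game on $N$ with $n=|N|$, let $i\in N$, and let $v_i$ be the component game (the unique $v_i\in\ell^2(V)$ with $v_i(\emptyset)=0$ and $\mathrm{d}v_i=P\mathrm{d}_iv$). Define $u_i\in\ell^2(V)$ by, for each $S\subset N\setminus\{i\}$, $$u_i(S\cup\{i\}) = \frac{1}{n2^n}\sum_{T\subset N\setminus\{i\}} \frac{\binom{n}{|S\triangle T|+1}+\binom{n}{|S\triangle T|+2}+\cdots+\binom{n}{n}}{\binom{n-1}{|S\triangle T|}}\bigl(v(T\cup\{i\})-v(T)\bigr),$$ and $u_i(S) = -u_i(S\cup\{i\})$, where $S\triangle T=(S\cup T)\setminus(S\cap T)$. Then $v_i = u_i - u_i(\emptyset)$. In particular, $$u_i(\emptyset) = -\frac{1}{n2^n}\sum_{T\subset N\setminus\{i\}}\frac{\binom{n}{|T|+1}+\cdots+\binom{n}{n}}{\binom{n-1}{|T|}}\bigl(v(T\cup\{i\})-v(T)\bigr).$$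
   Context: Let $N$ be a finite set of players. A game is a function $v\colon 2^N\to\mathbb{R}$ with $v(\emptyset)=0$. The hypercube graph $G=(V,E)$ has $V=2^N$ and oriented edges $E=\{(S,S\cup\{i\}) : i\in N,\ S\subset N\setminus\{i\}\}$. $\ell^2(V)$ and $\ell^2(E)$ are the spaces of real functions on $V$ and $E$ with the standard inner products $\sum_{S}u(S)w(S)$ and $\sum_{e}f(e)g(e)$. $\mathrm{d}\colon \ell^2(V)\to\ell^2(E)$ is $\mathrm{d}u(S,S\cup\{i\}) = u(S\cup\{i\})-u(S)$. For $i\in N$, $\mathrm{d}_i\colon\ell^2(V)\to\ell^2(E)$ is defined by $\mathrm{d}_i u(S,S\cup\{j\}) = u(S\cup\{i\})-u(S)$ if $j=i$ and $0$ if $j\ne i$. $P$ is the orthogonal projection of $\ell^2(E)$ onto the range $\mathcal{R}(\mathrm{d})$. *)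

(* Defs.v *)
From HB Require Import structures.
From mathcomp Require Import all_boot all_order all_algebra.
Set Implicit Arguments. Unset Strict Implicit. Unset Printing Implicit Defensive.
Import Order.TTheory GRing.Theory Num.Theory.
Local Open Scope ring_scope.

(* Players: a finite type I (the set N = [set: I]).
   Vertices V = {set I}; l2(V) = functions {set I} -> R.
   Edges E = pairs (S, j) with j \notin S (the oriented edge (S, S u {j}));
   l2(E) is represented by functions {set I} * I -> R, of which only the
   values on edges matter (inner product sums over edges only). *)

Definition is_edge (I : finType) (e : {set I} * I) : bool := e.2 \notin e.1.

Definition inner_E (R : ringType) (I : finType) (f g : {set I} * I -> R) : R :=
  \sum_(e : {set I} * I | is_edge e) f e * g e.

Definition dV (R : ringType) (I : finType) (u : {set I} -> R) : {set I} * I -> R :=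
  fun e => u (e.2 |: e.1) - u e.1.

Definition dVi (R : ringType) (I : finType) (i : I) (u : {set I} -> R)
  : {set I} * I -> R :=
  fun e => if e.2 == i then u (i |: e.1) - u e.1 else 0.

(* g = P f, P the orthogonal projection of l2(E) onto range(d):
   g lies in range(d) and f - g is orthogonal to range(d).
   (Equality in l2(E) means equality on edges.) *)
Definition is_proj_range_d (R : ringType) (I : finType)
  (f g : {set I} * I -> R) : Prop :=
  (exists u : {set I} -> R, forall e, is_edge e -> g e = dV u e) /\
  (forall w : {set I} -> R, inner_E (fun e => f e - g e) (dV w) = 0).

Definition component_game (R : ringType) (I : finType) (v : {set I} -> R) (i : I)
  (vi : {set I} -> R) : Prop :=
  vi set0 = 0 /\ is_proj_range_d (dVi i v) (dV vi).

Definition symdiff (I : finType) (S T : {set I}) : {set I} :=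
  (S :|: T) :\: (S :&: T).

Definition coef (R : fieldType) (n k : nat) : R :=
  (\sum_(k.+1 <= m < n.+1) 'C(n, m))%N%:R / ('C(n.-1, k))%:R.

(* u_i(S u {i}) for S a subset of N \ {i} *)
Definition ui_plus (R : fieldType) (I : finType) (v : {set I} -> R) (i : I)
  (S : {set I}) : R :=
  (#|I| * 2 ^ #|I|)%N%:R^-1 *
  \sum_(T : {set I} | i \notin T)
     coef R #|I| #|symdiff S T| * (v (i |: T) - v T).

Definition ui (R : fieldType) (I : finType) (v : {set I} -> R) (i : I)
  (X : {set I}) : R :=
  if i \in X then ui_plus v i (X :\ i) else - ui_plus v i X.

(* Main.v *)
Require Import Defs.
From HB Require Import structures.
From mathcomp Require Import all_boot all_order all_algebra.
From mathcomp Require Import zify ring lra.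
Import Order.TTheory GRing.Theory Num.Theory.
Local Open Scope ring_scope.

Definition Bs (n k : nat) : nat := (\sum_(k.+1 <= m < n.+1) 'C(n, m))%N.

Lemma Bs_step n k : (k < n)%N -> Bs n k = ('C(n, k.+1) + Bs n k.+1)%N.
Proof. by move=> kn; rewrite /Bs big_ltn. Qed.

Lemma Bs_n n : Bs n n = 0%N.
Proof. by rewrite /Bs big_geq. Qed.

Lemma Bs_0 n : (Bs n 0).+1 = (2 ^ n)%N.
Proof.
have := expnDn 1 1 n; rewrite addn1 => ->.
rewrite -(big_mkord xpredT (fun i => 'C(n, i) * (1 ^ (n - i) * 1 ^ i)))%N.
rewrite big_ltn // /Bs bin0 !exp1n !muln1 add1n; congr (_.+1).
by apply: eq_bigr => j _; rewrite !exp1n !muln1.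
Qed.

Section Scal.
Variable R : realFieldType.

Lemma scal n k : (0 < n)%N -> (k < n)%N ->
  2%:R * coef R n k + k%:R * (coef R n k - coef R n k.-1)
  + (n.-1 - k)%:R * (coef R n k - coef R n k.+1)
  = if k == 0%N then (n * 2 ^ n)%:R else 0.
Proof.
case: n => // m _ ltk /=.
rewrite /coef -/(Bs m.+1 k) -/(Bs m.+1 k.-1) -/(Bs m.+1 k.+1).
have cpos : ('C(m, k))%:R != 0 :> R by rewrite pnatr_eq0 -lt0n bin_gt0.
have G1 : (m - k)%:R * ((Bs m.+1 k.+1)%:R / ('C(m, k.+1))%:R)
     = k.+1%:R * (Bs m.+1 k.+1)%:R / ('C(m, k))%:R :> R.
  case: (ltnP k m) => hk.
    have c1 : ('C(m, k.+1))%:R != 0 :> R by rewrite pnatr_eq0 -lt0n bin_gt0.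
    have E := mul_bin_left m k.
    have E' : (k.+1%:R * ('C(m, k.+1))%:R = (m - k)%:R * ('C(m, k))%:R :> R).
      by rewrite -!natrM E.
    rewrite mulrA; apply/eqP; rewrite eqr_div //.
    have H3 : forall a b c : R, a * b * c = b * (a * c) by move=> *; ring.
    by rewrite !H3 E'.
  have -> : k = m by apply/eqP; rewrite eqn_leq hk -ltnS ltk.
  by rewrite Bs_n subnn !(mul0r, mulr0).
rewrite [m.+1.-1]/=.
case: k ltk cpos G1 => [|k] ltk cpos G1.
  rewrite /= mul0r addr0 subn0 bin0 !divr1 in G1 *.
  have h := Bs_0 m.+1; rewrite (Bs_step m.+1 0) // bin1 in h.
  rewrite mulrBr G1 ?divr1 (Bs_step m.+1 0) // bin1 -h.
  rewrite -addn1 !(natrD, natrM) /=; ring.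
rewrite /= in G1 *.
have ck : ('C(m, k))%:R != 0 :> R by rewrite pnatr_eq0 -lt0n bin_gt0 ltnW.
have G2 : k.+1%:R * ((Bs m.+1 k)%:R / ('C(m, k))%:R)
   = (m - k)%:R * (Bs m.+1 k)%:R / ('C(m, k.+1))%:R :> R.
  rewrite mulrA; apply/eqP; rewrite eqr_div //.
  have H3 : forall a b c : R, a * b * c = b * (a * c) by move=> *; ring.
  by rewrite !H3 -!natrM mul_bin_left.
rewrite mulrBr G2 mulrBr G1.
have e1 := Bs_step m.+1 k (ltnW ltk).
have e2 := Bs_step m.+1 k.+1 ltk.
have e3 := mul_bin_left m.+1 k.+1.
have e1' : (Bs m.+1 k)%:R = ('C(m.+1, k.+1))%:R + (Bs m.+1 k.+1)%:R :> R by rewrite e1 natrD.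
have e2' : (Bs m.+1 k.+1)%:R = ('C(m.+1, k.+2))%:R + (Bs m.+1 k.+2)%:R :> R by rewrite e2 natrD.
have e3' : k.+2%:R * ('C(m.+1, k.+2))%:R = (m - k)%:R * ('C(m.+1, k.+1))%:R :> R.
  by rewrite -!natrM e3 subSS.
have hmk : (m - k)%N = (m - k.+1).+1 by rewrite subnSK.
rewrite hmk in e3' *.
rewrite e1' e2'.
apply: (@eq_trans _ _ ((k.+2%:R * ('C(m.+1, k.+2))%:R - (m - k.+1).+1%:R * ('C(m.+1, k.+1))%:R) * ('C(m, k.+1))%:R^-1)).
  ring.
by rewrite e3' subrr mul0r.
Qed.
End Scal.

Set Implicit Arguments. Unset Strict Implicit.
Section Cube.
Variable I : finType.
Definition tog (X : {set I}) (j : I) := if j \in X then X :\ j else j |: X.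

Lemma in_tog (X : {set I}) j x : (x \in tog X j) = (x == j) (+) (x \in X).
Proof.
rewrite /tog; case: ifP => h; rewrite !inE; case: eqP => [->|] //; by rewrite h.
Qed.

Lemma in_symdiff (S T : {set I}) x : (x \in symdiff S T) = (x \in S) (+) (x \in T).
Proof. by rewrite !inE; case: (x \in S); case: (x \in T). Qed.

Lemma symdiff_tog (S T : {set I}) j : symdiff (tog S j) T = tog (symdiff S T) j.
Proof.
apply/setP => x; rewrite in_symdiff !in_tog in_symdiff.
by case: (x == j); case: (x \in S); case: (x \in T).
Qed.

Lemma tog_D1 (X : {set I}) (i j : I) : j != i -> (tog X j) :\ i = tog (X :\ i) j.
Proof.
move=> ji; apply/setP => x; rewrite !inE !in_tog !inE.
have [->|xi] := eqVneq x i; first by rewrite eq_sym (negbTE ji).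
by [].
Qed.

Lemma in_tog_neq (X : {set I}) (i j : I) : j != i -> (i \in tog X j) = (i \in X).
Proof. by move=> ji; rewrite in_tog eq_sym (negbTE ji). Qed.

Lemma tog_in (X : {set I}) j : j \in X -> tog X j = X :\ j.
Proof. by rewrite /tog => ->. Qed.

Lemma tog_out (X : {set I}) j : j \notin X -> tog X j = j |: X.
Proof. by rewrite /tog => /negbTE ->. Qed.

Lemma card_tog (U : {set I}) j : #|tog U j| = if j \in U then #|U|.-1 else #|U|.+1.
Proof.
rewrite /tog; case: ifP => h; first by rewrite (cardsD1 j U) h.
by rewrite cardsU1 h.
Qed.

Lemma const_conn (R : Type) (z : {set I} -> R) :
  (forall (S : {set I}) j, j \notin S -> z (j |: S) = z S) -> forall X, z X = z set0.
Proof.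
move=> hz.
have H : forall k (X : {set I}), #|X| = k -> z X = z set0.
  elim => [|k IH] X hX.
    by move/eqP: hX; rewrite cards_eq0 => /eqP ->.
  have : X != set0 by rewrite -card_gt0 hX.
  case/set0Pn => j jX.
  rewrite -(setD1K jX) hz; last by rewrite !inE eqxx.
  apply: IH; move: hX; rewrite (cardsD1 j X) jX; lia.
by move=> X; apply: (H #|X|).
Qed.
End Cube.

Set Implicit Arguments. Unset Strict Implicit.
Section Main.
Variable R : realFieldType.
Variable I : finType.
Variable v : {set I} -> R.
Variable i : I.
Local Notation h := (ui_plus v i).
Local Notation a T := (v (i |: T) - v T).

Lemma n_gt0 : (0 < #|I|)%N.
Proof. by apply/card_gt0P; exists i. Qed.

Lemma inner_id (U : {set I}) : i \notin U ->
  2%:R * coef R #|I| #|U| + \sum_(j | j != i) (coef R #|I| #|U| - coef R #|I| #|tog U j|)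
  = if U == set0 then (#|I| * 2 ^ #|I|)%N%:R else 0.
Proof.
move=> iU.
have kn : (#|U| < #|I|)%N.
  have := cardsC U; have : (0 < #|~: U|)%N by apply/card_gt0P; exists i; rewrite inE.
  lia.
rewrite -cards_eq0 -(@scal R _ _ n_gt0 kn) -addrA.
apply: (congr1 (fun x => 2%:R * coef R #|I| #|U| + x)).
rewrite (bigID (fun j => j \in U)) /=.
have -> : \sum_(j | (j != i) && (j \in U)) (coef R #|I| #|U| - coef R #|I| #|tog U j|)
   = \sum_(j in U) (coef R #|I| #|U| - coef R #|I| #|U|.-1).
  apply: eq_big => j; first by case: eqP => // ->; rewrite (negbTE iU).
  by move=> /andP[_ jU]; rewrite card_tog jU.
have -> : \sum_(j | (j != i) && (j \notin U)) (coef R #|I| #|U| - coef R #|I| #|tog U j|)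
   = \sum_(j in ~: U :\ i) (coef R #|I| #|U| - coef R #|I| #|U|.+1).
  apply: eq_big => j; first by rewrite !inE.
  by move=> /andP[_ jU]; rewrite card_tog (negbTE jU).
rewrite !sumr_const !mulr_natl.
have c2 : #|~: U :\ i| = (#|I|.-1 - #|U|)%N.
  have := cardsD1 i (~: U); rewrite inE iU add1n.
  have := cardsC U; lia.
by rewrite c2.
Qed.

Lemma symdiff_eq0 (S T : {set I}) : (symdiff S T == set0) = (S == T).
Proof.
apply/eqP/eqP => [H|->].
  apply/setP => x; move/setP: H => /(_ x); rewrite in_symdiff inE.
  by case: (x \in S); case: (x \in T).
by apply/setP => x; rewrite in_symdiff inE; case: (x \in T).
Qed.

Lemma green (S : {set I}) : i \notin S ->
  (h S + h S) + \sum_(j | j != i) (h S - h (tog S j)) = a S.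
Proof.
move=> iS.
pose c := ((#|I| * 2 ^ #|I|)%N%:R^-1 : R).
pose F (X : {set I}) := \sum_(T : {set I} | i \notin T) coef R #|I| #|symdiff X T| * (v (i |: T) - v T).
have hE (X : {set I}) : h X = c * F X by [].
under eq_bigr => j _ do rewrite !hE -mulrBr.
rewrite !hE -mulr_sumr -!mulrDr.
have key : F S + F S + \sum_(j | j != i) (F S - F (tog S j))
    = (#|I| * 2 ^ #|I|)%N%:R * a S.
  rewrite /F /=.
  under [\sum_(j | j != i) _]eq_bigr => j _ do rewrite -sumrB.
  rewrite exchange_big /= -!big_split /=.
  have E : forall T : {set I}, i \notin T ->
    coef R #|I| #|symdiff S T| * a T + coef R #|I| #|symdiff S T| * a T +
    \sum_(j | j != i) (coef R #|I| #|symdiff S T| * a T - coef R #|I| #|symdiff (tog S j) T| * a T)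
    = (if symdiff S T == set0 then (#|I| * 2 ^ #|I|)%N%:R else 0) * a T.
    move=> T iT.
    rewrite -(@inner_id (symdiff S T)); last by rewrite in_symdiff (negbTE iS) (negbTE iT).
    under eq_bigr => j _ do rewrite symdiff_tog -mulrBl.
    rewrite -mulr_suml; ring.
  rewrite (eq_bigr _ E) (bigD1 S) //= big1 ?addr0.
    by rewrite symdiff_eq0 eqxx.
  by move=> T /andP[_ TS]; rewrite symdiff_eq0 eq_sym (negbTE TS) mul0r.
rewrite key mulrA mulVf ?mul1r // pnatr_eq0 -lt0n muln_gt0 n_gt0 expn_gt0.
by [].
Qed.

Lemma ui_in (X : {set I}) : i \in X -> ui v i X = h (X :\ i).
Proof. by rewrite /ui => ->. Qed.

Lemma ui_out (X : {set I}) : i \notin X -> ui v i X = - h X.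
Proof. by rewrite /ui => /negbTE ->. Qed.

Lemma lap (X : {set I}) :
  \sum_j (ui v i X - ui v i (tog X j)) = if i \in X then a (X :\ i) else - a X.
Proof.
rewrite (bigD1 i) //=.
case: (boolP (i \in X)) => iX.
  have iS : i \notin X :\ i by rewrite !inE eqxx.
  rewrite (tog_in iX) (ui_in iX) (ui_out iS) opprK.
  rewrite -(green iS).
  congr (_ + _); apply: eq_bigr => j ji.
  rewrite (@ui_in (tog X j)) ?in_tog_neq // tog_D1 //.
have iS : i \in i |: X by rewrite setU11.
rewrite (tog_out iX) (ui_out iX) (ui_in iS) setU1K //.
rewrite -(green iX) opprD.
have -> : \sum_(j | j != i) (- h X - ui v i (tog X j))
   = - \sum_(j | j != i) (h X - h (tog X j)).
  rewrite -sumrN; apply: eq_bigr => j ji.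
  rewrite (@ui_out (tog X j)) ?in_tog_neq // opprB opprK addrC.
  by [].
by rewrite opprD.
Qed.

Lemma sum_if_eq (P : pred I) (F : I -> R) :
  \sum_(j | P j) (if j == i then F j else 0) = if P i then F i else 0.
Proof.
case: (boolP (P i)) => Pi.
  rewrite (bigD1 i) //= eqxx big1 ?addr0 // => j /andP[_ /negbTE ->] //.
by apply: big1 => j Pj; case: eqP => // ji; move: Pi; rewrite -ji Pj.
Qed.


Lemma div_formula (g : {set I} * I -> R) (w : {set I} -> R) :
  inner_E g (dV w) = \sum_(X : {set I}) w X *
    (\sum_(j in X) g (X :\ j, j) - \sum_(j | j \notin X) g (X, j)).
Proof.
rewrite /inner_E /dV.
under eq_bigr do rewrite mulrBr.
rewrite sumrB.
have P2 : \sum_(e | is_edge e) g e * w e.1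
    = \sum_(X : {set I}) \sum_(j | j \notin X) g (X, j) * w X.
  by rewrite pair_big_dep /=; apply: eq_big => [[X j]|[X j]].
have P1 : \sum_(e | is_edge e) g e * w (e.2 |: e.1)
    = \sum_(X : {set I}) \sum_(j in X) g (X :\ j, j) * w X.
  have Sa : \sum_(e | is_edge e) g e * w (e.2 |: e.1)
      = \sum_(X : {set I}) \sum_(j | j \notin X) g (X, j) * w (j |: X).
    by rewrite pair_big_dep /=; apply: eq_big => [[X j]|[X j]].
  rewrite Sa (exchange_big_dep xpredT) //= [RHS](exchange_big_dep xpredT) //=.
  apply: eq_bigr => j _.
  symmetry.
  rewrite (reindex_onto (fun X => j |: X) (fun Y => Y :\ j)) /=; last first.
    by move=> Y jY; rewrite setD1K.
  apply: eq_big => X.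
    rewrite setU11 /=; case: (boolP (j \in X)) => jX.
      apply/negbTE/eqP => E; move: jX; rewrite -E !inE eqxx //.
    by rewrite setU1K // eqxx.
  by move=> /andP[_ /eqP ->].
rewrite P1 P2 -sumrB; apply: eq_bigr => X _.
rewrite mulrBr !mulr_sumr; congr (_ - _); apply: eq_bigr => j _; by rewrite mulrC.
Qed.


Lemma orth0 (w : {set I} -> R) :
  inner_E (fun e => dVi i v e - dV (fun S => ui v i S - ui v i set0) e) (dV w) = 0.
Proof.
rewrite div_formula big1 // => X _.
apply/eqP; rewrite mulf_eq0; apply/orP; right; apply/eqP.
rewrite /dVi /dV /=.
rewrite (eq_bigr (fun j => (if j == i then v (i |: (X :\ j)) - v (X :\ j) else 0)
   - (ui v i X - ui v i (tog X j)))); last first.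
  move=> j jX; rewrite setD1K // (tog_in jX); congr (_ - _).
  by rewrite opprB addrA subrK.
rewrite [\sum_(j | j \notin X) _](eq_bigr (fun j => (if j == i then v (i |: X) - v X else 0)
   + (ui v i X - ui v i (tog X j)))); last first.
  move=> j jX; rewrite (tog_out jX); congr (_ + _).
  ring.
rewrite sumrB sum_if_eq [\sum_(j | j \notin X) _]big_split /= sum_if_eq.
have L := lap X; rewrite (bigID (fun j => j \in X)) /= in L.
case: (boolP (i \in X)) => iX /= in L *.
  rewrite -L; ring.
rewrite -[a X]opprK -L; ring.
Qed.

Lemma part1 : component_game v i (fun S => ui v i S - ui v i set0).
Proof.
split; first by rewrite subrr.
split; first by exists (fun S => ui v i S - ui v i set0).
exact: orth0.
Qed.

End Main.

Lemma part2 (R : realFieldType) (I : finType) (v : {set I} -> R) (i : I)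
  (vi : {set I} -> R) : component_game v i vi ->
  forall S : {set I}, vi S = ui v i S - ui v i set0.
Proof.
move=> [vi0 [_ orth]] S.
have [_ [_ orth1]] := part1 v i.
pose w0 := fun S : {set I} => ui v i S - ui v i set0.
pose z := fun S : {set I} => w0 S - vi S.
have H : \sum_(e | is_edge e) dV z e ^+ 2 = 0.
  have h1 := orth z; have h2 := orth1 z.
  rewrite /inner_E /= in h1 h2.
  transitivity (\sum_(e | is_edge e) (dVi i v e - dV vi e) * dV z e
     - \sum_(e | is_edge e) (dVi i v e - dV w0 e) * dV z e).
    rewrite -sumrB; apply: eq_bigr => e _; rewrite /dV /z /w0 /=; ring.
  by rewrite h1 h2 subrr.
have Hz : forall e, is_edge e -> dV z e = 0.
  move=> e he.
  have Hnn : forall e, is_edge e -> 0 <= dV z e ^+ 2 by move=> e' _; exact: sqr_ge0.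
  have Hall := @psumr_eq0P _ _ (fun e => is_edge e) (fun e => dV z e ^+ 2) Hnn H.
  by move: (Hall e he) => /= /eqP; rewrite sqrf_eq0 => /eqP.
have hz : forall (T : {set I}) j, j \notin T -> z (j |: T) = z T.
  by move=> T j jT; apply/eqP; rewrite -subr_eq0; apply/eqP; exact: (Hz (T, j) jT).
have := const_conn hz S.
rewrite /z /w0 vi0 !subrr.
by move/eqP; rewrite subr_eq0 => /eqP ->.
Qed.

Lemma part3 (R : realFieldType) (I : finType) (v : {set I} -> R) (i : I) :
  ui v i set0 =
    - ((#|I| * 2 ^ #|I|)%N%:R^-1 *
       \sum_(T : {set I} | i \notin T)
          (\sum_(#|T|.+1 <= m < #|I|.+1) 'C(#|I|, m))%N%:R
            / ('C(#|I|.-1, #|T|))%:R * (v (i |: T) - v T)).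
Proof.
have sd0 : forall T : {set I}, symdiff set0 T = T.
  by move=> T; apply/setP => x; rewrite in_symdiff inE.
rewrite ui_out ?in_set0 // /ui_plus.
by under eq_bigr do rewrite sd0.
Qed.

Unset Implicit Arguments.
Unset Strict Implicit.

Theorem theorem3p9 (R : realFieldType) (I : finType) (v : {set I} -> R)
  (hv : v set0 = 0) (i : I) :
  (* v_i := u_i - u_i(emptyset) is the component game (existence) ... *)
  component_game v i (fun S => ui v i S - ui v i set0) /\
  (* ... and any component game v_i equals u_i - u_i(emptyset) *)
  (forall vi : {set I} -> R, component_game v i vi ->
     forall S : {set I}, vi S = ui v i S - ui v i set0) /\
  (* in particular, the formula for u_i(emptyset) *)
  ui v i set0 =
    - ((#|I| * 2 ^ #|I|)%N%:R^-1 *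
       \sum_(T : {set I} | i \notin T)
          (\sum_(#|T|.+1 <= m < #|I|.+1) 'C(#|I|, m))%N%:R
            / ('C(#|I|.-1, #|T|))%:R * (v (i |: T) - v T)).
Proof.
split; first exact: part1.
split; first exact: part2.
exact: part3.
Qed.
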